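(* Let $\mathcal{M}=\langle M,\circ,e\rangle$ be an effective mge monoid with computable mge function $\eta$, let $\mathcal{T}$ be a monoidal finite-state transducer with output in $\mathcal{M}$, and let $\mathcal{A}^2$ be a (finitely given) squared output automaton for $\mathcal{T}$. Then a valuation $\langle\rho,\nu\rangle$ of $\mathcal{A}^2$ can be effectively computed.
   Context: An mge monoid is a monoid with right cancellation ($ac=bc\Rightarrow a=b$) in which every equalizable pair has a most general equalizer; here a tuple $\langle m_1,\dots,m_n\rangle$ is equalizable if some $\langle x_1,\dots,x_n\rangle$ (an equalizer) satisfies $m_1x_1=\dots=m_nx_n$, and an equalizer is most general (an mge) if every equalizer has the form $\langle x_1x,\dots,x_nx\rangle$ for some $x\in M$. It is effective if elements are represented as a recursive subset of $\mathbb{N}$ with computable operation, equality is decidable, equalizability of pairs is decidable, a computable $\eta:M^2\to M^2$ returns an mge for every equalizable pair, and inverses of invertible elements are computable. A transducer $\mathcal{T}=\langle\Sigma^*\times\mathcal{M},Q,I,F,\Delta\rangle$ has finite $\Delta\subseteq Q\times((\Sigma\cup\{\varepsilon\})\times M)\times Q$; $\Delta^*$ denotes generalized transitions (labels of paths, products of transition labels, including empty paths labelled by the unit). A squared output automaton for $\mathcal{T}$ is a monoidal automaton $\mathcal{A}^2=\langle\mathcal{M}\times\mathcal{M},Q\times Q,I\times I,F\times F,\Delta_2\rangle$ with finite $\Delta_2$ such that $\langle\langle p_1,p_2\rangle,\langle m,n\rangle,\langle q_1,q_2\rangle\rangle\in\Delta_2^*$ iff $\exists u\in\Sigma^*$ with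 $\langle p_1,\langle u,m\rangle,q_1\rangle,\langle p_2,\langle u,n\rangle,q_2\rangle\in\Delta^*$. A pair $\langle m_1,m_2\rangle$ is a relevant pair for a state $\langle q_1,q_2\rangle$ of $\mathcal{A}^2$ if $\langle q_1,q_2\rangle$ lies on a successful path of $\mathcal{A}^2$ (a path from $I\times I$ to $F\times F$) and $\langle\langle i_1,i_2\rangle,\langle m_1,m_2\rangle,\langle q_1,q_2\rangle\rangle\in\Delta_2^*$ for some $\langle i_1,i_2\rangle\in I\times I$. A valuation is a pair of partial functions $\rho,\nu:Q^2\to M^2$ such that: $\rho(q)$ is defined iff $q$ has a relevant pair; if defined, $\rho(q)=\langle e,e\rangle$ when $q\in I^2$ and otherwise $\rho(q)$ is some relevant pair of $q$; $\nu(q)=\langle e,e\rangle$ if $\rho(q)=\langle m,m\rangle$ for some $m$; otherwise $\nu(q)=\eta(\rho(q))$ if $\rho(q)$ is defined and equalizable, and $\nu(q)$ is undefined otherwise. *)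

(* Defs.v *)
From mathcomp Require Import all_boot.
Set Implicit Arguments. Unset Strict Implicit. Unset Printing Implicit Defensive.

(* Model of computation: mu-recursive functions on nat.                *)
Inductive prog : Type :=
| PZero
| PSucc
| PProj of nat
| PComp of prog & seq prog
| PRec of prog & prog
| PMin of prog.

Inductive eval : prog -> seq nat -> nat -> Prop :=
| eZero xs : eval PZero xs 0
| eSucc x xs : eval PSucc (x :: xs) x.+1
| eProj i xs : i < size xs -> eval (PProj i) xs (nth 0 xs i)
| eComp f gs xs ys y : evals gs xs ys -> eval f ys y -> eval (PComp f gs) xs y
| eRec0 f g xs y : eval f xs y -> eval (PRec f g) (0 :: xs) y
| eRecS f g n xs r y :
    eval (PRec f g) (n :: xs) r -> eval g (n :: r :: xs) y ->
    eval (PRec f g) (n.+1 :: xs) y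
| eMin f xs n :
    eval f (n :: xs) 0 -> (forall m, m < n -> exists k, eval f (m :: xs) k.+1) ->
    eval (PMin f) xs n
with evals : seq prog -> seq nat -> seq nat -> Prop :=
| esNil xs : evals [::] xs [::]
| esCons g gs xs y ys : eval g xs y -> evals gs xs ys -> evals (g :: gs) xs (y :: ys).

(* Goedel coding of finite sequences of naturals (a bijection seq nat -> nat) *)
Definition cd (s : seq nat) : nat := CodeSeq.code s.
Definition cd_pair (p : nat * nat) : nat := cd [:: p.1; p.2].
Definition cd_opt_pair (o : option (nat * nat)) : nat :=
  if o is Some p then (cd_pair p).+1 else 0.
Definition bool_nat (b : bool) : nat := if b then 1 else 0.

(* Monoids whose elements are a recursive subset of N.                  *)
(* Equality of elements is equality of their (unique) codes.            *)
Record nmonoid := NMonoid { Mdom : pred nat; mop : nat -> nat -> nat; me : nat }.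

Definition is_monoid (M : nmonoid) : Prop :=
  [/\ Mdom M (me M),
      (forall a b, Mdom M a -> Mdom M b -> Mdom M (mop M a b)),
      (forall a b c, Mdom M a -> Mdom M b -> Mdom M c ->
         mop M a (mop M b c) = mop M (mop M a b) c),
      (forall a, Mdom M a -> mop M (me M) a = a) &
      (forall a, Mdom M a -> mop M a (me M) = a)].

Definition right_cancellative (M : nmonoid) : Prop :=
  forall a b c, Mdom M a -> Mdom M b -> Mdom M c -> mop M a c = mop M b c -> a = b.

Definition equalizer (M : nmonoid) (m x : nat * nat) : Prop :=
  [/\ Mdom M x.1, Mdom M x.2 & mop M m.1 x.1 = mop M m.2 x.2].

Definition equalizable (M : nmonoid) (m : nat * nat) : Prop :=
  exists x, equalizer M m x.

Definition mge (M : nmonoid) (m x : nat * nat) : Prop :=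
  equalizer M m x /\
  forall y, equalizer M m y ->
    exists z, [/\ Mdom M z, y.1 = mop M x.1 z & y.2 = mop M x.2 z].

Definition mge_monoid (M : nmonoid) : Prop :=
  [/\ is_monoid M, right_cancellative M &
      forall m, Mdom M m.1 -> Mdom M m.2 -> equalizable M m -> exists x, mge M m x].

Definition invertible (M : nmonoid) (x : nat) : Prop :=
  exists y, [/\ Mdom M y, mop M x y = me M & mop M y x = me M].

(* effective mge monoid with computable mge function eta
   (equality is decidable since it is equality of natural numbers) *)
Definition effective_mge_monoid (M : nmonoid) (eta : nat * nat -> nat * nat) : Prop :=
  mge_monoid M /\
      (forall m, Mdom M m.1 -> Mdom M m.2 ->
         [/\ Mdom M (eta m).1, Mdom M (eta m).2 & equalizable M m -> mge M m (eta m)]) /\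
      (exists p, forall x, eval p [:: x] (bool_nat (Mdom M x))) /\
      (exists p, forall a b, Mdom M a -> Mdom M b -> eval p [:: a; b] (mop M a b)) /\
      (exists p, exists d : nat -> nat -> bool,
         (forall a b, Mdom M a -> Mdom M b -> (d a b <-> equalizable M (a, b))) /\
         (forall a b, Mdom M a -> Mdom M b -> eval p [:: a; b] (bool_nat (d a b)))) /\
      (exists p, forall a b, Mdom M a -> Mdom M b -> eval p [:: a; b] (cd_pair (eta (a, b)))) /\
      (exists p, forall x, Mdom M x -> invertible M x ->
         exists y, [/\ Mdom M y, mop M x y = me M, mop M y x = me M & eval p [:: x] y]).

(* Transducers with output in M.  States: 0..nQ-1, input letters:      *)
(* 0..nSig-1, transitions (p, a, m, q) with a = None for epsilon.       *)
Record transducer := Transducer {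
  nQ : nat; nSig : nat; tI : seq nat; tF : seq nat;
  tDelta : seq (nat * option nat * nat * nat) }.

Definition wf_transducer (M : nmonoid) (T : transducer) : Prop :=
  [/\ all (fun q => q < nQ T) (tI T), all (fun q => q < nQ T) (tF T) &
      forall p a m q, (p, a, m, q) \in tDelta T ->
        [/\ p < nQ T, q < nQ T, Mdom M m & (if a is Some x then x < nSig T else true)]].

Definition oword (a : option nat) : seq nat := if a is Some x then [:: x] else [::].

Inductive tpath (M : nmonoid) (T : transducer) : nat -> seq nat -> nat -> nat -> Prop :=
| tp_nil p : p < nQ T -> tpath M T p [::] (me M) p
| tp_cons p a m q u m' r :
    (p, a, m, q) \in tDelta T -> tpath M T q u m' r ->
    tpath M T p (oword a ++ u) (mop M m m') r.

(* A monoidal automaton over M x M with states Q x Q (I x I, F x F) *)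
Definition sqautomaton := seq ((nat * nat) * (nat * nat) * (nat * nat)).

Inductive spath (M : nmonoid) (T : transducer) (A : sqautomaton) :
  nat * nat -> nat * nat -> nat * nat -> Prop :=
| sp_nil p : p.1 < nQ T -> p.2 < nQ T -> spath M T A p (me M, me M) p
| sp_cons p m q n r :
    (p, m, q) \in A -> spath M T A q n r ->
    spath M T A p (mop M m.1 n.1, mop M m.2 n.2) r.

Definition inI2 (T : transducer) (q : nat * nat) := (q.1 \in tI T) && (q.2 \in tI T).
Definition inF2 (T : transducer) (q : nat * nat) := (q.1 \in tF T) && (q.2 \in tF T).

Definition squared_output_automaton (M : nmonoid) (T : transducer) (A : sqautomaton) : Prop :=
  (forall p m q, (p, m, q) \in A ->
     [/\ p.1 < nQ T, p.2 < nQ T, q.1 < nQ T, q.2 < nQ T & Mdom M m.1 && Mdom M m.2]) /\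
  (forall p m q, spath M T A p m q <->
     exists u : seq nat, tpath M T p.1 u m.1 q.1 /\ tpath M T p.2 u m.2 q.2).

Definition on_successful_path M T A (q : nat * nat) : Prop :=
  exists i f mi mf, [/\ inI2 T i, inF2 T f, spath M T A i mi q & spath M T A q mf f].

Definition relevant_pair M T A (q m : nat * nat) : Prop :=
  on_successful_path M T A q /\ exists i, inI2 T i /\ spath M T A i m q.

Definition valuation M (eta : nat * nat -> nat * nat) T A
    (rho nu : nat * nat -> option (nat * nat)) : Prop :=
  forall q, q.1 < nQ T -> q.2 < nQ T ->
  [/\ (rho q <> None <-> exists m, relevant_pair M T A q m),
      (forall m, rho q = Some m ->
          if inI2 T q then m = (me M, me M) else relevant_pair M T A q m) &
      (match rho q with
       | Some m => if m.1 == m.2 then nu q = Some (me M, me M)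
                   else (equalizable M m -> nu q = Some (eta m)) /\
                        (~ equalizable M m -> nu q = None)
       | None => nu q = None
       end)].

Definition cd_opt_nat (a : option nat) : nat := if a is Some x then x.+1 else 0.
Definition cd_tr (t : nat * option nat * nat * nat) : nat :=
  let: (p, a, m, q) := t in cd [:: p; cd_opt_nat a; m; q].
Definition cd_tr2 (t : (nat * nat) * (nat * nat) * (nat * nat)) : nat :=
  let: (p, m, q) := t in cd [:: p.1; p.2; m.1; m.2; q.1; q.2].
Definition cd_input (T : transducer) (A : sqautomaton) : nat :=
  cd [:: nQ T; nSig T; cd (tI T); cd (tF T);
         cd [seq cd_tr t | t <- tDelta T]; cd [seq cd_tr2 t | t <- A]].

Definition cd_valuation (n : nat) (rho nu : nat * nat -> option (nat * nat)) : nat :=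
  cd [seq cd [:: cd_opt_pair (rho (i, j)); cd_opt_pair (nu (i, j))]
     | i <- iota 0 n, j <- iota 0 n].

(* Main.v *)
Require Import Defs.
From mathcomp Require Import all_boot.
Set Implicit Arguments. Unset Strict Implicit. Unset Printing Implicit Defensive.

Definition PR (n : nat) (f : seq nat -> nat) :=
  exists p, forall xs, size xs = n -> eval p xs (f xs).

Lemma PR_ext n f g : (forall xs, size xs = n -> f xs = g xs) -> PR n f -> PR n g.
Proof. move=> E [p Hp]; exists p => xs Hs; rewrite -E //; exact: Hp. Qed.

Lemma PR_zero n : PR n (fun _ => 0).
Proof. exists PZero => xs _; exact: eZero. Qed.

Lemma PR_proj n i : i < n -> PR n (fun xs => nth 0 xs i).
Proof. move=> hi; exists (PProj i) => xs Hs; apply: eProj; by rewrite Hs. Qed.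

Lemma PR_succ : PR 1 (fun xs => (nth 0 xs 0).+1).
Proof. exists PSucc => [[|x [|]]] //= _; exact: eSucc. Qed.

Definition Fall (T : Type) (P : T -> Prop) (s : seq T) := foldr (fun f Q => P f /\ Q) True s.

Lemma PR_comp n g fs : PR (size fs) g -> Fall (PR n) fs ->
  PR n (fun xs => g (map (fun f => f xs) fs)).
Proof.
move=> [pg Hg] HF.
have [ps Hps] : exists ps, forall xs, size xs = n -> evals ps xs (map (fun f => f xs) fs).
  elim: fs HF {Hg} => [|f fs' IH] /=; first by exists [::] => xs _; exact: esNil.
  move=> [[pf Hpf] /IH [ps Hps]].
  exists (pf :: ps) => xs Hs /=; apply: esCons; [exact: Hpf | exact: Hps].
exists (PComp pg ps) => xs Hs; apply: eComp (Hps xs Hs) _; apply: Hg; by rewrite size_map.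
Qed.

Fixpoint precf (f g : seq nat -> nat) (k : nat) (ys : seq nat) : nat :=
  match k with 0 => f ys | k'.+1 => g (k' :: precf f g k' ys :: ys) end.

Lemma PR_rec n f g : PR n f -> PR n.+2 g ->
  PR n.+1 (fun xs => precf f g (head 0 xs) (behead xs)).
Proof.
move=> [pf Hf] [pg Hg]; exists (PRec pf pg) => [[|k ys]] //= [Hs].
elim: k => [|k IH] /=; first by apply: eRec0; exact: Hf.
apply: eRecS IH _; apply: Hg => /=; by rewrite Hs.
Qed.

Inductive ex := EV of nat | EC of nat | EA of (seq nat -> nat) & seq ex.

Fixpoint sem (e : ex) (xs : seq nat) : nat :=
  match e with
  | EV i => nth 0 xs i
  | EC k => k
  | EA g es => g (map (fun e => sem e xs) es)
  end.

Fixpoint good (n : nat) (e : ex) : Prop :=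
  match e with
  | EV i => i < n
  | EC _ => True
  | EA g es => PR (size es) g /\ foldr (fun e P => good n e /\ P) True es
  end.

Lemma PR_const n k : PR n (fun _ => k).
Proof.
elim: k => [|k IH]; first exact: PR_zero.
have := PR_comp (fs := [:: fun _ => k]) PR_succ (conj IH I).
by apply: PR_ext.
Qed.

Lemma good_PR n e : good n e -> PR n (sem e).
Proof.
move: e; fix IH 1 => [[i|k|g es]] /=.
- exact: PR_proj.
- move=> _; exact: PR_const.
- move=> [Hg Hes].
  have Hfs : Fall (PR n) (map sem es).
    elim: es Hes {Hg} => [|e es IHes] /=; first by [].
    by move=> [He Hes]; split; [exact: IH | exact: IHes].
  have := PR_comp (fs := map sem es) _ Hfs; rewrite size_map => /(_ _ Hg).
  apply: PR_ext => xs _; by rewrite -map_comp.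
Qed.

Lemma PR_sem n e f : good n e -> (forall xs, size xs = n -> f xs = sem e xs) -> PR n f.
Proof. move=> /good_PR H E; apply: PR_ext H => xs /E ->. done. Qed.

Notation "xs ## i" := (nth 0 xs i) (at level 2, left associativity).

Ltac sizecase xs Hs :=
  case: xs Hs => [|a [|a0 [|a1 [|a2 [|a3 [|a4 [|? ?]]]]]]] // _.

Definition addf xs := xs##0 + xs##1.
Lemma PR_add : PR 2 addf.
Proof.
have := PR_rec (@PR_proj 1 0 isT) (good_PR (n:=3) (e := EA (fun ys => (ys##0).+1) [:: EV 1]) (conj PR_succ (conj isT I))).
apply: PR_ext => xs Hs; sizecase xs Hs; rewrite /addf /=.
by elim: a => //= a ->.
Qed.

Definition mulf xs := xs##0 * xs##1.
Lemma PR_mul : PR 2 mulf.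
Proof.
have := PR_rec (PR_zero 1) (good_PR (n:=3) (e := EA addf [:: EV 1; EV 2]) (conj PR_add (conj isT (conj isT I)))).
apply: PR_ext => xs Hs; sizecase xs Hs; rewrite /mulf /addf /=.
by elim: a => //= a ->; rewrite mulSn addnC.
Qed.

Definition predf xs := (xs##0).-1.
Lemma PR_pred : PR 1 predf.
Proof.
have := PR_rec (PR_zero 0) (@PR_proj 2 0 isT).
apply: PR_ext => xs Hs; sizecase xs Hs; by rewrite /predf /= //; case: a.
Qed.

Definition subf xs := xs##0 - xs##1.
Lemma PR_sub : PR 2 subf.
Proof.
have H := PR_rec (@PR_proj 1 0 isT) (good_PR (n:=3) (e := EA predf [:: EV 1]) (conj PR_pred (conj isT I))).
have := good_PR (n:=2) (e := EA (fun xs => precf (fun xs => xs##0) (fun ys => predf [:: ys##1]) (head 0 xs) (behead xs)) [:: EV 1; EV 0]) (conj H (conj isT (conj isT I))).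
apply: PR_ext => xs Hs; sizecase xs Hs; rewrite /subf /predf /=.
by elim: a0 => [|b IH] /=; rewrite ?subn0 // IH subnS.
Qed.

Definition itef xs := if xs##0 != 0 then xs##1 else xs##2.
Lemma PR_ite : PR 3 itef.
Proof.
have := PR_rec (@PR_proj 2 1 isT) (@PR_proj 4 2 isT).
apply: PR_ext => xs Hs; sizecase xs Hs; by rewrite /itef /= //; case: a.
Qed.

Definition notf xs := bool_nat (xs##0 == 0).
Lemma PR_not : PR 1 notf.
Proof.
have := good_PR (n:=1) (e := EA itef [:: EV 0; EC 0; EC 1]) (conj PR_ite (conj isT (conj I (conj I I)))).
apply: PR_ext => xs Hs; sizecase xs Hs; by rewrite /notf /itef /= //; case: a.
Qed.

Definition sgf xs := bool_nat (xs##0 != 0).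
Lemma PR_sg : PR 1 sgf.
Proof.
have := good_PR (n:=1) (e := EA itef [:: EV 0; EC 1; EC 0]) (conj PR_ite (conj isT (conj I (conj I I)))).
apply: PR_ext => xs Hs; sizecase xs Hs; by rewrite /sgf /itef /= //; case: a.
Qed.

Definition lef xs := bool_nat (xs##0 <= xs##1).
Lemma PR_le : PR 2 lef.
Proof.
have := good_PR (n:=2) (e := EA notf [:: EA subf [:: EV 0; EV 1]]) (conj PR_not (conj (conj PR_sub (conj isT (conj isT I))) I)).
apply: PR_ext => xs Hs; sizecase xs Hs; by rewrite /lef /notf /subf /=.
Qed.

Definition eqf xs := bool_nat (xs##0 == xs##1).
Lemma PR_eq : PR 2 eqf.
Proof.
have := good_PR (n:=2) (e := EA notf [:: EA addf [:: EA subf [:: EV 0; EV 1]; EA subf [:: EV 1; EV 0]]])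
  (conj PR_not (conj (conj PR_add (conj (conj PR_sub (conj isT (conj isT I))) (conj (conj PR_sub (conj isT (conj isT I))) I))) I)).
apply: PR_ext => xs Hs; sizecase xs Hs; rewrite /eqf /notf /subf /addf /=.
by rewrite addn_eq0 !subn_eq0 -eqn_leq.
Qed.

Definition andf xs := bool_nat ((xs##0 != 0) && (xs##1 != 0)).
Lemma PR_and : PR 2 andf.
Proof.
have := good_PR (n:=2) (e := EA itef [:: EV 0; EA sgf [:: EV 1]; EC 0]) (conj PR_ite (conj isT (conj (conj PR_sg (conj isT I)) (conj I I)))).
apply: PR_ext => xs Hs; sizecase xs Hs; by rewrite /andf /itef /sgf /= //; case: a.
Qed.

Definition pow2f xs := 2 ^ xs##0.
Lemma PR_pow2 : PR 1 pow2f.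
Proof.
have := PR_rec (PR_const 0 1) (good_PR (n:=2) (e := EA addf [:: EV 1; EV 1]) (conj PR_add (conj isT (conj isT I)))).
apply: PR_ext => xs Hs; sizecase xs Hs; rewrite /pow2f /addf /=.
by elim: a => //= a ->; rewrite expnS mul2n addnn.
Qed.

Lemma PR_reindex m n f (idx : nat -> nat) : PR m f -> (forall i, i < m -> idx i < n) ->
  PR n (fun xs => f [seq xs##(idx i) | i <- iota 0 m]).
Proof.
move=> Hf Hi.
have Hfs : Fall (PR n) [seq (fun zs : seq nat => zs##(idx i)) | i <- iota 0 m].
  rewrite /Fall; have : forall i, i \in iota 0 m -> idx i < n.
    by move=> i; rewrite mem_iota add0n; exact: Hi.
  elim: (iota 0 m) => //= i s IH H.
  split; last by apply: IH => j Hj; apply: H; rewrite inE Hj orbT.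
  apply: PR_proj; exact: H (mem_head _ _).
have := PR_comp (fs := [seq (fun zs : seq nat => zs##(idx i)) | i <- iota 0 m]) _ Hfs.
rewrite size_map size_iota => /(_ f Hf); apply: PR_ext => xs _; by rewrite -map_comp.
Qed.

Lemma reidx_drop1 t a b :
  [seq (a::b::t)##(if i is 0 then 0 else i.+1) | i <- iota 0 (size t).+1] = a :: t.
Proof.
rewrite /= -[in RHS](mkseq_nth 0 t) /mkseq (iotaDl 1 0) -map_comp.
by congr (_ :: _); apply: eq_map => i /=; rewrite add1n.
Qed.



Lemma PR_drop1 m f : PR m.+1 f -> PR m.+2 (fun zs => f (zs##0 :: drop 2 zs)).
Proof.
move=> Hf.
have H := PR_reindex (n := m.+2) (idx := fun i => if i is 0 then 0 else i.+1) Hf.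
have H2 : PR m.+2 (fun xs => f [seq xs##(if i is 0 then 0 else i.+1) | i <- iota 0 m.+1]).
  by apply: H => [[|i]] //=; rewrite !ltnS.
apply: PR_ext H2 => [[|a [|b t]]] // Hs.
have {}Hs : size t = m by case: Hs.
by rewrite -Hs reidx_drop1 /= drop0.
Qed.

Definition EAll (g : seq nat -> nat) n := EA g (map EV (iota 0 n)).
Lemma good_EAll n g : PR n g -> good n (EAll g n).
Proof.
move=> H; split; first by rewrite size_map size_iota.
have : forall i, i \in iota 0 n -> i < n by move=> i; rewrite mem_iota.
elim: (iota 0 n) => //= i s IH Hi; split; first exact: Hi (mem_head _ _).
by apply: IH => j Hj; apply: Hi; rewrite inE Hj orbT.
Qed.
Lemma sem_EAll n g xs : size xs = n -> sem (EAll g n) xs = g xs.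
Proof. by move=> <-; rewrite /= -map_comp -{3}(mkseq_nth 0 xs). Qed.

Definition sumc (f : seq nat -> nat) b (ps : seq nat) := \sum_(0 <= j < b) f (j :: ps).
Lemma PR_sum m f : PR m.+1 f -> PR m.+1 (fun xs => sumc f (head 0 xs) (behead xs)).
Proof.
move=> Hf.
have Hg : PR m.+2 (fun zs => zs##1 + f (zs##0 :: drop 2 zs)).
  apply: (PR_sem (e := EA addf [:: EV 1; EAll (fun zs => f (zs##0 :: drop 2 zs)) m.+2])).
    by split; [exact: PR_add | split; [done | split; [apply: good_EAll; exact: PR_drop1 | done]]].
  move=> xs Hs; transitivity (addf [:: xs##1; sem (EAll (fun zs => f (zs##0 :: drop 2 zs)) m.+2) xs]).
    by rewrite (sem_EAll _ Hs).
  by [].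
have := PR_rec (PR_zero m) Hg.
apply: PR_ext => [[|b ps]] //= [Hs]; rewrite /sumc.
elim: b => [|b IH] /=; first by rewrite big_geq.
by rewrite IH big_nat_recr //= drop0.
Qed.

Hint Resolve PR_add PR_mul PR_pred PR_sub PR_ite PR_not PR_sg PR_le PR_eq PR_and PR_pow2 PR_succ : prdb.

Ltac gd := cbn [good foldr size]; repeat (match goal with
  | |- _ /\ _ => split
  | |- True => exact I
  | |- is_true _ => done
  end); try (eauto with prdb).

Lemma sum_ind_lt L c : L <= c -> \sum_(0 <= v < c) bool_nat (v < L) = L.
Proof.
move=> HL; rewrite (@big_cat_nat _ _ _ L 0 c _ _ (leq0n L) HL) /=.
rewrite (@eq_big_nat _ _ _ 0 L _ (fun _ => 1)); last by move=> i /andP[_ ->].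
rewrite (@eq_big_nat _ _ _ L c _ (fun _ => 0)); last by move=> i /andP[]; rewrite leqNgt => /negbTE ->.
by rewrite !sum_nat_const_nat muln1 muln0 addn0 subn0.
Qed.

Definition dvF (ys : seq nat) := bool_nat ((ys##0).+1 * ys##2 <= ys##1).
Definition dvn c d := sumc dvF c [:: c; d].
Lemma PR_dvF : PR 3 dvF.
Proof. apply: (PR_sem (e := EA lef [:: EA mulf [:: EA (fun ys => (ys##0).+1) [:: EV 0]; EV 2]; EV 1])); gd. Qed.
Definition dvf xs := dvn xs##0 xs##1.
Lemma PR_dv : PR 2 dvf.
Proof.
apply: (PR_sem (e := EA (fun xs => sumc dvF (head 0 xs) (behead xs)) [:: EV 0; EV 0; EV 1])); gd.
exact: PR_sum PR_dvF.
Qed.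
Hint Resolve PR_dv : prdb.

Lemma dvnE c d : 0 < d -> dvn c d = c %/ d.
Proof.
move=> Hd; rewrite /dvn /sumc /dvF /= -[RHS](@sum_ind_lt (c %/ d) c (leq_div _ _)).
by apply: eq_big_nat => i _; rewrite -leq_divRL.
Qed.

(* head of a code: the 2-adic valuation *)
Definition hdF (ys : seq nat) := bool_nat (dvn ys##1 (2 ^ (ys##0).+1) * 2 ^ (ys##0).+1 == ys##1).
Definition hdn c := sumc hdF c [:: c].
Lemma PR_hdF : PR 2 hdF.
Proof.
apply: (PR_sem (e := EA eqf [:: EA mulf [:: EA dvf [:: EV 1; EA pow2f [:: EA (fun ys => (ys##0).+1) [:: EV 0]]];
   EA pow2f [:: EA (fun ys => (ys##0).+1) [:: EV 0]]]; EV 1])); gd.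
Qed.
Definition hdf xs := hdn xs##0.
Lemma PR_hd : PR 1 hdf.
Proof.
apply: (PR_sem (e := EA (fun xs => sumc hdF (head 0 xs) (behead xs)) [:: EV 0; EV 0])); gd.
exact: PR_sum PR_hdF.
Qed.
Hint Resolve PR_hd : prdb.

Lemma hdnE c : hdn c = logn 2 c.
Proof.
case: c => [|c]; first by rewrite logn0 /hdn /sumc big_geq.
rewrite (logn_count_dvd _ (isT : prime 2)) /hdn /sumc /hdF.
rewrite (@eq_big_nat _ _ _ 0 c.+1 _ (fun v => nat_of_bool (2 ^ v.+1 %| c.+1))); last first.
  by move=> i _; rewrite /= dvnE ?expn_gt0 // -dvdn_eq.
rewrite -(big_add1 _ _ 0 c.+2 xpredT (fun k => nat_of_bool (2 ^ k %| c.+1))) /=.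
rewrite big_nat_recr //=.
have -> : (2 ^ c.+1 %| c.+1) = false.
  apply/negbTE; apply/negP => /dvdn_leq => /(_ isT); rewrite leqNgt ltn_expl //.
by rewrite addn0.
Qed.

Definition tln c := dvn c (2 ^ (hdn c).+1).
Definition tlf xs := tln xs##0.
Lemma PR_tl : PR 1 tlf.
Proof.
apply: (PR_sem (e := EA dvf [:: EV 0; EA pow2f [:: EA (fun ys => (ys##0).+1) [:: EA hdf [:: EV 0]]]])); gd.
Qed.
Hint Resolve PR_tl : prdb.

Lemma code_cons x s : CodeSeq.code (x :: s) = 2 ^ x * (CodeSeq.code s).*2.+1.
Proof. by []. Qed.

Lemma hdn_cons x s : hdn (CodeSeq.code (x :: s)) = x.
Proof.
rewrite hdnE code_cons lognM ?expn_gt0 // pfactorK // logn_coprime ?addn0 //.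
by rewrite coprime2n /= odd_double.
Qed.

Lemma tln_cons x s : tln (CodeSeq.code (x :: s)) = CodeSeq.code s.
Proof.
rewrite /tln hdn_cons dvnE ?expn_gt0 // code_cons expnSr divnMl ?expn_gt0 //.
by rewrite -addn1 -muln2 divnMDl // addn0.
Qed.

Lemma hdn0 : hdn 0 = 0.
Proof. by rewrite /hdn /sumc big_geq. Qed.
Lemma tln0 : tln 0 = 0.
Proof. by rewrite /tln /dvn /sumc big_geq. Qed.

Lemma tln_code s : tln (CodeSeq.code s) = CodeSeq.code (behead s).
Proof. by case: s => [|x s]; [exact: tln0 | exact: tln_cons]. Qed.
Lemma hdn_code s : hdn (CodeSeq.code s) = head 0 s.
Proof. by case: s => [|x s]; [exact: hdn0 | exact: hdn_cons]. Qed.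

Lemma code_eq0 s : (CodeSeq.code s == 0) = (s == [::]).
Proof. by case: s => //= x s; rewrite muln_eq0 expn_eq0. Qed.

Lemma size_le_code s : size s <= CodeSeq.code s.
Proof.
elim: s => //= x s IH; rewrite -/(CodeSeq.code s).
apply: leq_trans (_ : (CodeSeq.code s).*2.+1 <= _); first by rewrite ltnS -addnn (leq_trans IH) ?leq_addr.
by rewrite leq_pmull // expn_gt0.
Qed.

Definition itln i c := precf (fun ys => ys##0) (fun zs => tln zs##1) i [:: c].
Definition itlf xs := itln xs##0 xs##1.
Lemma PR_itl : PR 2 itlf.
Proof.
have := PR_rec (@PR_proj 1 0 isT) (good_PR (n := 3) (e := EA tlf [:: EV 1]) ltac:(gd)).
by apply: PR_ext => [[|a [|b [|]]]].
Qed.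
Hint Resolve PR_itl : prdb.

Lemma itln_code i s : itln i (CodeSeq.code s) = CodeSeq.code (drop i s).
Proof.
elim: i => [|i IH]; first by rewrite /= drop0.
rewrite (_ : itln i.+1 _ = tln (itln i (CodeSeq.code s))) // IH tln_code; congr CodeSeq.code.
by rewrite !drop_behead iterS.
Qed.

Definition nthcn c i := hdn (itln i c).
Definition nthcf xs := nthcn xs##0 xs##1.
Lemma PR_nthc : PR 2 nthcf.
Proof. apply: (PR_sem (e := EA hdf [:: EA itlf [:: EV 1; EV 0]])); gd. Qed.
Hint Resolve PR_nthc : prdb.

Lemma nthc_code s i : nthcn (CodeSeq.code s) i = nth 0 s i.
Proof.
rewrite /nthcn itln_code hdn_code.
by rewrite -nth0 nth_drop addn0.
Qed.

Definition sizeF (ys : seq nat) := bool_nat (itln ys##0 ys##1 != 0).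
Definition sizen c := sumc sizeF c [:: c].
Definition sizef xs := sizen xs##0.
Lemma PR_size : PR 1 sizef.
Proof.
apply: (PR_sem (e := EA (fun xs => sumc sizeF (head 0 xs) (behead xs)) [:: EV 0; EV 0])); gd.
apply: PR_sum; apply: (PR_sem (e := EA sgf [:: EA itlf [:: EV 0; EV 1]])); gd.
Qed.
Hint Resolve PR_size : prdb.

Lemma sizen_code s : sizen (CodeSeq.code s) = size s.
Proof.
rewrite /sizen /sumc -[RHS](@sum_ind_lt (size s) (CodeSeq.code s) (size_le_code s)).
apply: eq_big_nat => i _; rewrite /sizeF /= itln_code code_eq0 -size_eq0 size_drop.
by rewrite subn_eq0 -ltnNge.
Qed.

Definition consn a c := 2 ^ a * (c.*2.+1).
Definition consf xs := consn xs##0 xs##1.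
Lemma PR_cons : PR 2 consf.
Proof.
apply: (PR_sem (e := EA mulf [:: EA pow2f [:: EV 0]; EA (fun ys => (ys##0).+1) [:: EA addf [:: EV 1; EV 1]]])); gd.
by move=> xs _; rewrite /consf /consn /mulf /pow2f /addf /= addnn.
Qed.
Hint Resolve PR_cons : prdb.
Lemma consn_code x s : consn x (CodeSeq.code s) = CodeSeq.code (x :: s).
Proof. by []. Qed.

Lemma map_nth_iota (xs : seq nat) : [seq xs##i | i <- iota 0 (size xs)] = xs.
Proof. exact: (mkseq_nth 0 xs). Qed.

Lemma PR_cons_drop d m h f : PR (d + m) h -> PR m.+1 f ->
  PR (d + m) (fun zs => f (h zs :: drop d zs)).
Proof.
move=> Hh Hf.
have Hfs : Fall (PR (d + m)) (h :: [seq (fun zs : seq nat => zs##(d + i)) | i <- iota 0 m]).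
  split => //; rewrite /Fall.
  have : forall i, i \in iota 0 m -> d + i < d + m by move=> i; rewrite mem_iota ltn_add2l.
  elim: (iota 0 m) => //= i s IH Hi; split; first by apply: PR_proj; exact: Hi (mem_head _ _).
  by apply: IH => j Hj; apply: Hi; rewrite inE Hj orbT.
have := PR_comp (g := f) _ Hfs; rewrite /= size_map size_iota => /(_ Hf).
apply: PR_ext => xs Hs /=; congr (f (_ :: _)).
rewrite -map_comp; have Hd : size (drop d xs) = m by rewrite size_drop Hs addKn.
rewrite -[in RHS](map_nth_iota (drop d xs)) Hd; apply: eq_map => i /=; by rewrite nth_drop.
Qed.

Lemma sem_vars0 n xs : size xs = n.+1 ->
  [seq sem e xs | e <- EV 0 :: map EV (iota 0 n.+1)] = xs##0 :: xs.
Proof. move=> Hs; rewrite map_cons -map_comp -Hs; congr (_ :: _); exact: (map_nth_iota xs). Qed.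

Lemma good_vars0 n : foldr (fun e P => good n.+1 e /\ P) True (EV 0 :: map EV (iota 0 n.+1)).
Proof.
split => //.
have : forall i, i \in iota 0 n.+1 -> i < n.+1 by move=> i; rewrite mem_iota.
elim: (iota 0 n.+1) => //= i s IH Hi; split; first exact: Hi (mem_head _ _).
by apply: IH => j Hj; apply: Hi; rewrite inE Hj orbT.
Qed.

Definition bstep (f : seq nat -> nat) (zs : seq nat) := consn (f ((zs##2 - zs##0).-1 :: drop 3 zs)) zs##1.
Definition buildn N f (ps : seq nat) := precf (fun _ => 0) (bstep f) N (N :: ps).

Lemma buildnE N f ps : buildn N f ps = CodeSeq.code [seq f (k :: ps) | k <- iota 0 N].
Proof.
have gen : forall t, t <= N -> precf (fun _ => 0) (bstep f) t (N :: ps) =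
    CodeSeq.code [seq f (k :: ps) | k <- iota (N - t) t].
  elim=> [|t IH] Ht //.
  rewrite (_ : precf _ _ t.+1 _ = bstep f [:: t, precf (fun _ => 0) (bstep f) t (N :: ps), N & ps]) //.
  rewrite IH ?(ltnW Ht) // /bstep /= drop0.
  have -> : N - t.+1 = (N - t).-1 by rewrite subnS.
  by rewrite prednK // subn_gt0.
by rewrite /buildn gen // subnn.
Qed.

Lemma PR_build m f : PR m.+1 f -> PR m.+1 (fun xs => buildn (head 0 xs) f (behead xs)).
Proof.
move=> Hf.
have Hb : PR (3 + m) (bstep f).
  have H1 : PR (3 + m) (fun zs => f ((zs##2 - zs##0).-1 :: drop 3 zs)).
    apply: PR_cons_drop Hf.
    by apply: (PR_sem (e := EA predf [:: EA subf [:: EV 2; EV 0]])); gd; rewrite addnC.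
  apply: (PR_sem (e := EA consf [:: EAll (fun zs => f ((zs##2 - zs##0).-1 :: drop 3 zs)) (3 + m); EV 1])).
    by gd; apply: good_EAll.
  move=> xs Hs; transitivity (consf [:: sem (EAll (fun zs => f ((zs##2 - zs##0).-1 :: drop 3 zs)) (3 + m)) xs; xs##1]).
    by rewrite (sem_EAll _ Hs).
  by [].
have Hr := PR_rec (PR_zero m.+1) Hb.
apply: (PR_sem (e := EA (fun xs => precf (fun _ => 0) (bstep f) (head 0 xs) (behead xs)) (EV 0 :: map EV (iota 0 m.+1)))).
  split; first by rewrite /= size_map size_iota.
  exact: good_vars0.
move=> xs Hs; transitivity ((fun xs => precf (fun _ => 0) (bstep f) (head 0 xs) (behead xs))
   [seq sem e xs | e <- EV 0 :: map EV (iota 0 m.+1)]); last by [].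
by rewrite (sem_vars0 Hs); case: xs Hs.
Qed.

Hint Resolve PR_itl PR_nthc PR_size PR_cons PR_hd PR_tl PR_dv : prdb.

Lemma bool_natK b : (bool_nat b != 0) = b.
Proof. by case: b. Qed.
Lemma bool_natK' b : (bool_nat b == 0) = ~~ b.
Proof. by case: b. Qed.

Section Iter.
Variables frm to vl : seq nat -> nat.
Hypotheses (Hfrm : PR 2 frm) (Hto : PR 2 to) (Hvl : PR 2 vl).

Definition foldF (zs : seq nat) :=
  let t := nthcn zs##4 zs##0 in
  let s := frm [:: t; zs##5] in
  if (to [:: t; zs##5] == zs##2) && (nthcn zs##3 s != 0) then vl [:: t; nthcn zs##3 s] else zs##1.

Lemma PR_foldF : PR 6 foldF.
Proof.
apply: (PR_sem (e := EA itef [:: EA andf [:: EA eqf [:: EA to [:: EA nthcf [:: EV 4; EV 0]; EV 5]; EV 2]; EA nthcf [:: EV 3; EA frm [:: EA nthcf [:: EV 4; EV 0]; EV 5]]];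
   EA vl [:: EA nthcf [:: EV 4; EV 0]; EA nthcf [:: EV 3; EA frm [:: EA nthcf [:: EV 4; EV 0]; EV 5]]]; EV 1])); first by gd.
by move=> xs _; rewrite /foldF /itef /andf /eqf /= !bool_natK.
Qed.

Definition entryF (ys : seq nat) :=
  let c := nthcn ys##1 ys##0 in
  if c != 0 then c else precf (fun _ => 0) foldF (sizen ys##2) ys.

Lemma PR_entryF : PR 4 entryF.
Proof.
have HG := PR_rec (PR_zero 4) PR_foldF.
apply: (PR_sem (e := EA itef [:: EA sgf [:: EA nthcf [:: EV 1; EV 0]]; EA nthcf [:: EV 1; EV 0];
   EA (fun xs => precf (fun _ => 0) foldF (head 0 xs) (behead xs)) [:: EA sizef [:: EV 2]; EV 0; EV 1; EV 2; EV 3]])).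
  by gd.
move=> [|k [|T [|cA [|n [|]]]]] //= _.
by rewrite /entryF /itef /sgf /= bool_natK.
Qed.

Definition stepT T cA n := buildn (n * n) entryF [:: T; cA; n].
Definition stepF xs := stepT xs##0 xs##1 xs##2.
Lemma PR_stepF : PR 3 stepF.
Proof.
have HB := PR_build PR_entryF.
apply: (PR_sem (e := EA (fun xs => buildn (head 0 xs) entryF (behead xs)) [:: EA mulf [:: EV 2; EV 2]; EV 0; EV 1; EV 2])).
  by gd.
by [].
Qed.

Definition iterT K T0 cA n := precf (fun ys => ys##0) (fun zs => stepT zs##1 zs##3 zs##4) K [:: T0; cA; n].
Definition iterF xs := iterT xs##0 xs##1 xs##2 xs##3.
Lemma PR_iterF : PR 4 iterF.
Proof.
have H := PR_rec (@PR_proj 3 0 isT) (good_PR (n := 5) (e := EA stepF [:: EV 1; EV 3; EV 4]) ltac:(gd; exact: PR_stepF)).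
by apply: PR_ext H => [[|K [|T [|cA [|n [|]]]]]].
Qed.

End Iter.

Lemma count_strict (T : eqType) (a b : pred T) s :
  (forall x, a x -> b x) -> (exists2 x, x \in s & b x && ~~ a x) -> count a s < count b s.
Proof.
move=> Hab [x]; elim: s => //= y s IH; rewrite inE => /orP[/eqP <- /andP[-> /negbTE ->]|Hx Hb].
  by rewrite add0n add1n ltnS sub_count.
have := IH Hx Hb; case Ha: (a y); first by rewrite (Hab _ Ha) ltn_add2l.
by move=> H; apply: leq_trans H _; rewrite leq_addl.
Qed.

Lemma nthc_build N f ps k :
  nthcn (buildn N f ps) k = if k < N then f (k :: ps) else 0.
Proof.
rewrite buildnE nthc_code; case: ltnP => Hk.
  by rewrite (nth_map 0) ?size_iota // nth_iota.
by rewrite nth_default // size_map size_iota.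
Qed.

Section IterSpec.
Variables frm to vl : seq nat -> nat.
Hypothesis Hvl : forall t x, vl [:: t; x] != 0.
Variables (es : seq nat) (n : nat) (T0 : nat).
Let N := n * n.
Hypothesis Hto : forall t : nat, t \in es -> to [:: t; n] < N.
Hypothesis H0 : forall k, N <= k -> nthcn T0 k = 0.

Local Notation cA := (CodeSeq.code es).
Local Notation fr t := (frm [:: t; n]).
Local Notation tt t := (to [:: t; n]).

Definition fv T k := precf (fun _ => 0) (foldF frm to vl) (size es) [:: k; T; cA; n].

Lemma fold_spec T k j : j <= size es ->
  let v := precf (fun _ => 0) (foldF frm to vl) j [:: k; T; cA; n] in
  (v != 0 -> exists2 t, t \in es & [/\ tt t = k, nthcn T (fr t) != 0 & v = vl [:: t; nthcn T (fr t)]]) /\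
  ((exists2 i, i < j & tt (nth 0 es i) = k /\ nthcn T (fr (nth 0 es i)) != 0) -> v != 0).
Proof.
elim: j => [|j IH] Hj /=; first by split => // [[]].
have [IH1 IH2] := IH (ltnW Hj).
rewrite /foldF /= nthc_code.
set t := nth 0 es j.
case: ifP => [/andP[/eqP Ht HT]|Hf].
  split; last by move=> _; exact: Hvl.
  by move=> _; exists t; [exact: mem_nth | split].
split => //.
move=> [i]; rewrite ltnS leq_eqVlt => /orP[/eqP ->|Hi] [Ht HT].
  by move: Hf; rewrite -/t Ht eqxx HT.
by apply: IH2; exists i.
Qed.

Lemma fv_sound T k : fv T k != 0 ->
  exists2 t, t \in es & [/\ tt t = k, nthcn T (fr t) != 0 & fv T k = vl [:: t; nthcn T (fr t)]].
Proof. exact: (fold_spec T k (leqnn _)).1. Qed.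

Lemma fv_complete T k t : t \in es -> tt t = k -> nthcn T (fr t) != 0 -> fv T k != 0.
Proof.
move=> Hin Ht HT; apply: (fold_spec T k (leqnn _)).2.
exists (index t es); first by rewrite index_mem.
by rewrite nth_index.
Qed.

Lemma step_nth T k : nthcn (stepT frm to vl T cA n) k =
  if k < N then (if nthcn T k != 0 then nthcn T k else fv T k) else 0.
Proof. by rewrite /stepT nthc_build /entryF /= sizen_code. Qed.

Local Notation It i := (iterT frm to vl i T0 cA n).

Lemma ItS i : It i.+1 = stepT frm to vl (It i) cA n.
Proof. by []. Qed.

Lemma It_out i k : N <= k -> nthcn (It i) k = 0.
Proof. by case: i => [|i] Hk; [exact: H0 | rewrite ItS step_nth ltnNge Hk]. Qed.

Lemma It_mono i k : nthcn (It i) k != 0 -> nthcn (It i.+1) k = nthcn (It i) k.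
Proof.
move=> Hk; rewrite ItS step_nth Hk.
case: ltnP => // HN; by move: Hk; rewrite It_out ?eqxx.
Qed.

Lemma It_monoN i j k : i <= j -> nthcn (It i) k != 0 -> nthcn (It j) k = nthcn (It i) k.
Proof.
move=> /subnKC <-; elim: (j - i) => [|d IH]; first by rewrite addn0.
by move=> Hk; rewrite addnS It_mono IH // ?Hk.
Qed.

Lemma It_new i k : nthcn (It i.+1) k != 0 -> nthcn (It i) k = 0 ->
  exists2 t, t \in es & [/\ tt t = k, nthcn (It i) (fr t) != 0 &
     nthcn (It i.+1) k = vl [:: t; nthcn (It i) (fr t)]].
Proof.
rewrite ItS step_nth => H1 H2; move: H1; rewrite H2 eqxx /=.
case: ltnP => // _ H1; have [t Ht [E1 E2 E3]] := fv_sound H1.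
by exists t => //; split.
Qed.

Lemma It_prop i t : t \in es -> nthcn (It i) (fr t) != 0 -> nthcn (It i.+1) (tt t) != 0.
Proof.
move=> Hin HT; rewrite ItS step_nth (Hto Hin).
case: ifP => // /negbFE /eqP H; exact: fv_complete Hin erefl HT.
Qed.

Lemma It_sound (P : nat -> nat -> Prop) :
  (forall k, nthcn T0 k != 0 -> P k (nthcn T0 k)) ->
  (forall t x : nat, t \in es -> x != 0 -> P (fr t) x -> P (tt t) (vl [:: t; x])) ->
  forall i k, nthcn (It i) k != 0 -> P k (nthcn (It i) k).
Proof.
move=> HP0 HPs; elim=> [|i IH] k Hk; first exact: HP0.
case: (eqVneq (nthcn (It i) k) 0) => Hold.
  have [t Hin [E1 E2 E3]] := It_new Hk Hold.
  by rewrite E3 -E1; apply: HPs => //; exact: IH.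
by rewrite It_mono //; apply: IH.
Qed.

Definition closedT T := forall t : nat, t \in es -> nthcn T (fr t) != 0 -> nthcn T (tt t) != 0.

Definition cnt T := count (fun k => nthcn T k != 0) (iota 0 N).

Lemma closed_step i : closedT (It i) -> forall k, nthcn (It i.+1) k = nthcn (It i) k.
Proof.
move=> Hc k; rewrite ItS step_nth.
case: ltnP => Hk; last by rewrite It_out.
case: ifP => // /negbFE /eqP Hz; rewrite Hz.
apply/eqP; apply: contraT => Hf.
have [t Hin [E1 E2 E3]] := fv_sound Hf.
by move: (Hc t Hin E2); rewrite E1 Hz eqxx.
Qed.

Lemma closedP T : reflect (closedT T)
  (all (fun t => (nthcn T (fr t) != 0) ==> (nthcn T (tt t) != 0)) es).
Proof.
apply: (iffP allP) => H t Hin; first by move=> HT; move: (H t Hin); rewrite HT.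
by apply/implyP; exact: H.
Qed.

Lemma It_closed_or i : closedT (It i) \/ i <= cnt (It i).
Proof.
elim: i => [|i IH]; first by right.
case: (closedP (It i)) => Hc.
  left => t Hin; rewrite !closed_step //; exact: Hc.
case: IH => [//|IH]; right.
apply: leq_ltn_trans IH _; rewrite /cnt; apply: count_strict.
  by move=> k /= Hk; rewrite It_mono.
have [t Hin Ht] : exists2 t, t \in es & ~~ ((nthcn (It i) (fr t) != 0) ==> (nthcn (It i) (tt t) != 0)).
  by apply/allPn; apply/negP => /closedP.
move: Ht; rewrite negb_imply => /andP[H1 H2].
exists (tt t); first by rewrite mem_iota add0n Hto.
by rewrite H2 It_prop.
Qed.

Lemma It_closed : closedT (It N).
Proof.
case: (It_closed_or N) => // Hc.
have : all (fun k => nthcn (It N) k != 0) (iota 0 N).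
  by rewrite all_count eqn_leq count_size size_iota Hc.
move/allP => Hall t Hin _; apply: Hall; by rewrite mem_iota add0n Hto.
Qed.

Lemma It_reach (R : nat -> Prop) :
  (forall k, R k -> nthcn T0 k != 0) ->
  forall k, R k -> nthcn (It N) k != 0.
Proof. by move=> H k /H Hk; rewrite (It_monoN (leq0n N) Hk). Qed.

End IterSpec.

Hint Resolve PR_itl PR_nthc PR_size PR_cons PR_hd PR_tl PR_dv : prdb.

Lemma PR_oracle (dom : pred nat) (me : nat) (h : nat -> nat -> nat) pd ph :
  dom me -> (forall x, eval pd [:: x] (bool_nat (dom x))) ->
  (forall a b, dom a -> dom b -> eval ph [:: a; b] (h a b)) ->
  PR 2 (fun xs => h (if dom xs##0 then xs##0 else me) (if dom xs##1 then xs##1 else me)).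
Proof.
move=> Hme Hpd Hph.
have Hd : PR 1 (fun xs => bool_nat (dom xs##0)).
  by exists pd => [[|x [|]]] //= _; exact: Hpd.
have Hs : forall i, i < 2 -> PR 2 (fun xs => if dom xs##i then xs##i else me).
  move=> i Hi; apply: (PR_sem (e := EA itef [:: EA (fun xs => bool_nat (dom xs##0)) [:: EV i]; EV i; EC me])).
    by gd.
  by move=> xs _; rewrite /itef /=; case: (dom _).
have [p0 Hp0] := Hs 0 isT; have [p1 Hp1] := Hs 1 isT.
exists (PComp ph [:: p0; p1]) => xs Hxs.
apply: eComp; first by apply: esCons; [exact: Hp0 | apply: esCons; [exact: Hp1 | exact: esNil]].
by apply: Hph; case: ifP.
Qed.

Section Alg.
Variables (dom : pred nat) (me : nat) (op : nat -> nat -> nat) (dd : nat -> nat -> bool)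
  (eta : nat * nat -> nat * nat).
Hypotheses (Hop : PR 2 (fun xs => op (if dom xs##0 then xs##0 else me) (if dom xs##1 then xs##1 else me)))
  (Hdd : PR 2 (fun xs => bool_nat (dd (if dom xs##0 then xs##0 else me) (if dom xs##1 then xs##1 else me))))
  (Heta : PR 2 (fun xs => cd_pair (eta (if dom xs##0 then xs##0 else me, if dom xs##1 then xs##1 else me)))).

Definition san x := if dom x then x else me.
Definition sop a b := op (san a) (san b).
Definition sdd a b := dd (san a) (san b).
Definition seta a b := cd_pair (eta (san a, san b)).
Definition Ecode := (CodeSeq.code [:: me; me]).+1.

Definition frmFw (xs : seq nat) := nthcn xs##0 0 * xs##1 + nthcn xs##0 1.
Definition toFw (xs : seq nat) := nthcn xs##0 4 * xs##1 + nthcn xs##0 5.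
Definition vlFw (xs : seq nat) :=
  (consn (sop (nthcn (xs##1).-1 0) (nthcn xs##0 2)) (consn (sop (nthcn (xs##1).-1 1) (nthcn xs##0 3)) 0)).+1.
Definition vlBw (xs : seq nat) := 1.

Lemma PR_frmFw : PR 2 frmFw.
Proof. by apply: (PR_sem (e := EA addf [:: EA mulf [:: EA nthcf [:: EV 0; EC 0]; EV 1]; EA nthcf [:: EV 0; EC 1]])); gd. Qed.
Lemma PR_toFw : PR 2 toFw.
Proof. by apply: (PR_sem (e := EA addf [:: EA mulf [:: EA nthcf [:: EV 0; EC 4]; EV 1]; EA nthcf [:: EV 0; EC 5]])); gd. Qed.
Lemma PR_vlFw : PR 2 vlFw.
Proof.
apply: (PR_sem (e := EA (fun ys => (ys##0).+1) [:: EA consf [::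
   EA (fun xs => op (san xs##0) (san xs##1)) [:: EA nthcf [:: EA predf [:: EV 1]; EC 0]; EA nthcf [:: EV 0; EC 2]];
   EA consf [:: EA (fun xs => op (san xs##0) (san xs##1)) [:: EA nthcf [:: EA predf [:: EV 1]; EC 1]; EA nthcf [:: EV 0; EC 3]];
                EC 0]]])); by gd.
Qed.
Lemma PR_vlBw : PR 2 vlBw.
Proof. exact: PR_const. Qed.

(* membership of an index in a product set given by a code list *)
Definition memG2 (zs : seq nat) := bool_nat (nthcn zs##4 zs##1 * zs##3 + nthcn zs##4 zs##0 == zs##2).
Definition memG1 (ys : seq nat) := sumc memG2 (sizen ys##3) ys.
Definition memF (ys : seq nat) := sumc memG1 (sizen ys##2) ys.

Lemma PR_memG1 : PR 4 memG1.
Proof.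
have H2 : PR 5 memG2.
  by apply: (PR_sem (e := EA eqf [:: EA addf [:: EA mulf [:: EA nthcf [:: EV 4; EV 1]; EV 3]; EA nthcf [:: EV 4; EV 0]]; EV 2])); gd.
have HS := PR_sum H2.
apply: (PR_sem (e := EA (fun xs => sumc memG2 (head 0 xs) (behead xs)) [:: EA sizef [:: EV 3]; EV 0; EV 1; EV 2; EV 3])).
  by gd.
by move=> [|? [|? [|? [|? [|]]]]].
Qed.
Lemma PR_memF : PR 3 memF.
Proof.
have HS := PR_sum PR_memG1.
apply: (PR_sem (e := EA (fun xs => sumc memG1 (head 0 xs) (behead xs)) [:: EA sizef [:: EV 2]; EV 0; EV 1; EV 2])).
  by gd.
by move=> [|? [|? [|? [|]]]].
Qed.

Definition initF c (ys : seq nat) := if memF ys != 0 then c else 0.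
Lemma PR_initF c : PR 3 (initF c).
Proof.
apply: (PR_sem (e := EA itef [:: EA sgf [:: EAll memF 3]; EC c; EC 0])).
  by gd; apply: good_EAll; exact: PR_memF.
move=> [|? [|? [|? [|]]]] // _.
by rewrite /initF /itef /sgf /= bool_natK.
Qed.

Definition nuc r :=
  if r == 0 then 0 else
  if nthcn r.-1 0 == nthcn r.-1 1 then Ecode else
  if sdd (nthcn r.-1 0) (nthcn r.-1 1) then (seta (nthcn r.-1 0) (nthcn r.-1 1)).+1 else 0.
Definition rc (ys : seq nat) := if nthcn ys##2 ys##0 != 0 then nthcn ys##1 ys##0 else 0.
Definition outF (ys : seq nat) := consn (rc ys) (consn (nuc (rc ys)) 0).

Lemma PR_nuc : PR 1 (fun xs => nuc xs##0).
Proof.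
apply: (PR_sem (e := EA itef [:: EA sgf [:: EV 0]; EA itef [:: EA eqf [:: EA nthcf [:: EA predf [:: EV 0]; EC 0]; EA nthcf [:: EA predf [:: EV 0]; EC 1]]; EC Ecode;
   EA itef [:: EA (fun xs => bool_nat (sdd xs##0 xs##1)) [:: EA nthcf [:: EA predf [:: EV 0]; EC 0]; EA nthcf [:: EA predf [:: EV 0]; EC 1]];
               EA (fun ys => (ys##0).+1) [:: EA (fun xs => seta xs##0 xs##1) [:: EA nthcf [:: EA predf [:: EV 0]; EC 0]; EA nthcf [:: EA predf [:: EV 0]; EC 1]]]; EC 0]]; EC 0])).
  by gd.
move=> [|r [|]] // _; rewrite /nuc /itef /sgf /eqf /= !bool_natK.
by case: r.
Qed.
Hint Resolve PR_nuc : prdb.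

Lemma PR_rc : PR 3 rc.
Proof. by apply: (PR_sem (e := EA itef [:: EA sgf [:: EA nthcf [:: EV 2; EV 0]]; EA nthcf [:: EV 1; EV 0]; EC 0])); gd;
  move=> xs _; rewrite /rc /itef /sgf /= bool_natK. Qed.
Hint Resolve PR_rc : prdb.

Lemma PR_outF : PR 3 outF.
Proof.
apply: (PR_sem (e := EA consf [:: EAll rc 3; EA consf [:: EA (fun xs => nuc xs##0) [:: EAll rc 3]; EC 0]])).
  by gd; apply: good_EAll; exact: PR_rc.
by move=> [|? [|? [|? [|]]]].
Qed.

Definition TFc x := let n := nthcn x 0 in
  iterT frmFw toFw vlFw (n * n) (buildn (n * n) (initF Ecode) [:: n; nthcn x 2]) (nthcn x 5) n.
Definition TBc x := let n := nthcn x 0 in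
  iterT toFw frmFw vlBw (n * n) (buildn (n * n) (initF 1) [:: n; nthcn x 3]) (nthcn x 5) n.
Definition ALG x := let n := nthcn x 0 in buildn (n * n) outF [:: TFc x; TBc x].

Lemma PR_ALG : PR 1 (fun xs => ALG xs##0).
Proof.
have H1 := PR_build (PR_initF Ecode).
have H2 := PR_build (PR_initF 1).
have H3 := PR_build PR_outF.
have H4 := PR_iterF PR_frmFw PR_toFw PR_vlFw.
have H5 := PR_iterF PR_toFw PR_frmFw PR_vlBw.
apply: (PR_sem (e := EA (fun xs => buildn (head 0 xs) outF (behead xs)) [:: EA mulf [:: EA nthcf [:: EV 0; EC 0]; EA nthcf [:: EV 0; EC 0]]; EA (iterF frmFw toFw vlFw) [:: EA mulf [:: EA nthcf [:: EV 0; EC 0]; EA nthcf [:: EV 0; EC 0]]; EA (fun xs => buildn (head 0 xs) (initF Ecode) (behead xs)) [:: EA mulf [:: EA nthcf [:: EV 0; EC 0]; EA nthcf [:: EV 0; EC 0]]; EA nthcf [:: EV 0; EC 0]; EA nthcf [:: EV 0; EC 2]]; EA nthcf [:: EV 0; EC 5]; EA nthcf [:: EV 0; EC 0]]; EA (iterF toFw frmFw vlBw) [:: EA mulf [:: EA nthcf [:: EV 0; EC 0]; EA nthcf [:: EV 0; EC 0]]; EA (fun xs => buildn (head 0 xs) (initF 1) (behead xs)) [:: EA mulf [:: EA nthcf [:: EV 0; EC 0]; EA nthcf [:: EV 0; EC 0]]; EA nthcf [:: EV 0; EC 0]; EA nthcf [:: EV 0; EC 3]]; EA nthcf [:: EV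 0; EC 5]; EA nthcf [:: EV 0; EC 0]]])); first by gd.
by [].
Qed.

End Alg.

Lemma sum_seq_neq0 (s : seq nat) (F : nat -> nat) :
  (\sum_(x <- s) F x != 0) = has (fun x => F x != 0) s.
Proof. by elim: s => [|x s IH]; rewrite ?big_nil ?big_cons //= addn_eq0 negb_and IH. Qed.

Lemma sum_iota_nth (s : seq nat) (F : nat -> nat) :
  \sum_(0 <= i < size s) F (nth 0 s i) = \sum_(x <- s) F x.
Proof. by rewrite /index_iota subn0 -[in RHS](mkseq_nth 0 s) /mkseq big_map. Qed.

Lemma memF_spec k n s : (memF [:: k; n; CodeSeq.code s] != 0) =
  has (fun a => has (fun b => a * n + b == k) s) s.
Proof.
rewrite /memF /sumc (_ : [:: k; n; CodeSeq.code s]##2 = CodeSeq.code s) // sizen_code.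
rewrite (eq_bigr (fun i => \sum_(0 <= j < size s) bool_nat (nth 0 s i * n + nth 0 s j == k))); last first.
  move=> i _; rewrite /memG1 /sumc (_ : [:: i; k; n; CodeSeq.code s]##3 = CodeSeq.code s) // sizen_code.
  by apply: eq_bigr => j _; rewrite /memG2 /= !nthc_code.
rewrite (sum_iota_nth s (fun a => \sum_(0 <= j < size s) bool_nat (a * n + nth 0 s j == k))).
rewrite sum_seq_neq0; apply: eq_in_has => a _ /=.
rewrite (sum_iota_nth s (fun b => bool_nat (a * n + b == k))) sum_seq_neq0; apply: eq_in_has => b _ /=; by rewrite bool_natK.
Qed.

Lemma idx_inj n a b c d : b < n -> d < n -> a * n + b = c * n + d -> a = c /\ b = d.
Proof.
move=> Hb Hd E.
have n0 : 0 < n by apply: leq_ltn_trans (leq0n b) Hb.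
have E1 := congr1 (fun x => x %/ n) E; have E2 := congr1 (fun x => x %% n) E.
move: E1 E2 => /=; rewrite !divnMDl // !modnMDl !divn_small // !modn_small // !addn0 => -> ->.
by [].
Qed.

Lemma idx_lt n a b : a < n -> b < n -> a * n + b < n * n.
Proof.
move=> Ha Hb; apply: (@leq_trans (a * n + n)); first by rewrite ltn_add2l.
by rewrite addnC -mulSn leq_mul2r Ha orbT.
Qed.

Lemma allpairs_iota (G : nat -> nat) n m :
  [seq G (i * n + j) | i <- iota 0 m, j <- iota 0 n] = [seq G k | k <- iota 0 (m * n)].
Proof.
elim: m => [|m IH] //.
rewrite -addn1 iotaD allpairs_cat IH mulnDl mul1n iotaD map_cat /= add0n cats0.
congr (_ ++ _); rewrite add0n -[in RHS](addn0 (m * n)) iotaDl -map_comp.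
by apply: eq_map.
Qed.

Lemma frmFw_tr2 p m q n : frmFw [:: cd_tr2 (p, m, q); n] = p.1 * n + p.2.
Proof. by rewrite (_ : frmFw _ = nthcn (cd_tr2 (p, m, q)) 0 * n + nthcn (cd_tr2 (p, m, q)) 1) // /cd_tr2 /cd !nthc_code. Qed.
Lemma toFw_tr2 p m q n : toFw [:: cd_tr2 (p, m, q); n] = q.1 * n + q.2.
Proof. by rewrite (_ : toFw _ = nthcn (cd_tr2 (p, m, q)) 4 * n + nthcn (cd_tr2 (p, m, q)) 5) // /cd_tr2 /cd !nthc_code. Qed.
Lemma vlFw_tr2 dom me op p m q a b :
  vlFw dom me op [:: cd_tr2 (p, m, q); (CodeSeq.code [:: a; b]).+1] =
  (CodeSeq.code [:: sop dom me op a m.1; sop dom me op b m.2]).+1.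
Proof.
rewrite (_ : vlFw _ _ _ _ = (consn (sop dom me op (nthcn (CodeSeq.code [:: a; b]) 0) (nthcn (cd_tr2 (p, m, q)) 2))
  (consn (sop dom me op (nthcn (CodeSeq.code [:: a; b]) 1) (nthcn (cd_tr2 (p, m, q)) 3)) 0)).+1) //.
by rewrite /cd_tr2 /cd !nthc_code.
Qed.

Definition dec c := if c is c'.+1 then Some (nthcn c' 0, nthcn c' 1) else None.
Lemma dec_code a b : dec (CodeSeq.code [:: a; b]).+1 = Some (a, b).
Proof. by rewrite /dec !nthc_code. Qed.

Section Main.
Variables (M : nmonoid) (eta : nat * nat -> nat * nat) (d : nat -> nat -> bool).
Hypotheses (Hmon : is_monoid M)
  (Heta : forall m, Mdom M m.1 -> Mdom M m.2 ->
     [/\ Mdom M (eta m).1, Mdom M (eta m).2 & equalizable M m -> mge M m (eta m)])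
  (Hd : forall a b, Mdom M a -> Mdom M b -> (d a b <-> equalizable M (a, b))).
Variables (T : transducer) (A : sqautomaton).
Hypotheses (Hwf : wf_transducer M T) (Hsoa : squared_output_automaton M T A).

Local Notation n := (nQ T).
Local Notation dom := (Mdom M).
Local Notation me := (me M).
Local Notation op := (mop M).
Local Notation N := (n * n).

Let Hme : dom me. Proof. by case: Hmon. Qed.
Let Hopd a b : dom a -> dom b -> dom (op a b). Proof. by case: Hmon => _ H _ _ _; exact: H. Qed.
Let Hassoc a b c : dom a -> dom b -> dom c -> op a (op b c) = op (op a b) c.
Proof. by case: Hmon => _ _ H _ _; exact: H. Qed.
Let Hlu a : dom a -> op me a = a. Proof. by case: Hmon => _ _ _ H _; exact: H. Qed.
Let Hru a : dom a -> op a me = a. Proof. by case: Hmon => _ _ _ _ H; exact: H. Qed.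

Let HA p m q : (p, m, q) \in A -> [/\ p.1 < n, p.2 < n, q.1 < n, q.2 < n & dom m.1 && dom m.2].
Proof. by case: Hsoa => H _ /H. Qed.

Lemma spath_dom p m q : spath M T A p m q -> dom m.1 /\ dom m.2.
Proof.
elim=> [r _ _|p0 m0 q0 n0 r Hin _ [IH1 IH2]] /=; first by [].
by have [_ _ _ _ /andP[H1 H2]] := HA Hin; split; apply: Hopd.
Qed.

Lemma spath_range p m q : spath M T A p m q -> p.1 < n /\ p.2 < n.
Proof. by case=> [r -> ->|p0 m0 q0 n0 r Hin _]; [|have [-> -> _ _ _] := HA Hin]. Qed.

Lemma spath_snoc i l p m q : spath M T A i l p -> (p, m, q) \in A ->
  spath M T A i (op l.1 m.1, op l.2 m.2) q.
Proof.
move=> H; elim: H m q => [r Hr1 Hr2|p0 m0 q0 n0 r Hin0 Hp IH] m q Hin /=.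
  have [_ _ Hq1 Hq2 /andP[Hm1 Hm2]] := HA Hin.
  rewrite !Hlu //; have := sp_cons Hin (sp_nil M A Hq1 Hq2).
  by rewrite /= !Hru // -surjective_pairing.
have [_ _ _ _ /andP[Hm01 Hm02]] := HA Hin0.
have [_ _ _ _ /andP[Hm1 Hm2]] := HA Hin.
have [Hn1 Hn2] := spath_dom Hp.
have := sp_cons Hin0 (IH _ _ Hin); rewrite /= !Hassoc //.
Qed.


Local Notation es := [seq cd_tr2 t | t <- A].
Local Notation x := (cd_input T A).

Lemma xE : [/\ nthcn x 0 = n, nthcn x 2 = CodeSeq.code (tI T), nthcn x 3 = CodeSeq.code (tF T)
   & nthcn x 5 = CodeSeq.code es].
Proof. by rewrite /cd_input /cd !nthc_code. Qed.

Lemma mem_es t : t \in es -> exists p m q : nat * nat, (p, m, q) \in A /\ t = cd_tr2 (p, m, q).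
Proof. by case/mapP => [[[p m] q] Hin ->]; exists p, m, q. Qed.

Local Notation T0F := (buildn N (initF (Ecode me)) [:: n; CodeSeq.code (tI T)]).
Local Notation T0B := (buildn N (initF 1) [:: n; CodeSeq.code (tF T)]).
Local Notation TF := (iterT frmFw toFw (vlFw dom me op) N T0F (CodeSeq.code es) n).
Local Notation TB := (iterT toFw frmFw vlBw N T0B (CodeSeq.code es) n).

Lemma H0F k : N <= k -> nthcn T0F k = 0.
Proof. by rewrite nthc_build ltnNge => ->. Qed.
Lemma H0B k : N <= k -> nthcn T0B k = 0.
Proof. by rewrite nthc_build ltnNge => ->. Qed.
Lemma HvlF t y : vlFw dom me op [:: t; y] != 0. Proof. by []. Qed.
Lemma HvlB t y : vlBw [:: t; y] != 0. Proof. by []. Qed.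
Lemma HtoF (t : nat) : t \in es -> toFw [:: t; n] < N.
Proof. by case/mem_es => p [m [q [Hin ->]]]; rewrite toFw_tr2; have [_ _ ? ? _] := HA Hin; exact: idx_lt. Qed.
Lemma HtoB (t : nat) : t \in es -> frmFw [:: t; n] < N.
Proof. by case/mem_es => p [m [q [Hin ->]]]; rewrite frmFw_tr2; have [? ? _ _ _] := HA Hin; exact: idx_lt. Qed.

Let HI : forall a, a \in tI T -> a < n. Proof. by case: Hwf => /allP H _ _. Qed.
Let HF : forall a, a \in tF T -> a < n. Proof. by case: Hwf => _ /allP H _. Qed.

Definition PF k y := exists a b, [/\ y = (CodeSeq.code [:: a; b]).+1, dom a, dom b &
   forall q, q.1 < n -> q.2 < n -> k = q.1 * n + q.2 -> exists i, inI2 T i /\ spath M T A i (a, b) q].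
Definition PB k (y : nat) := forall q, q.1 < n -> q.2 < n -> k = q.1 * n + q.2 ->
   exists f mf, inF2 T f /\ spath M T A q mf f.

Lemma init_spec (s : seq nat) c k : (forall a, a \in s -> a < n) -> nthcn (buildn N (initF c) [:: n; CodeSeq.code s]) k != 0 ->
  nthcn (buildn N (initF c) [:: n; CodeSeq.code s]) k = c /\
  forall q, q.1 < n -> q.2 < n -> k = q.1 * n + q.2 -> (q.1 \in s) && (q.2 \in s).
Proof.
move=> Hs; rewrite nthc_build; case: ltnP => // _; rewrite /initF memF_spec.
case: ifP => // /hasP [a Ha /hasP [b Hb /eqP Hk]] _; split => // q Hq1 Hq2 Hkq.
have [E1 E2] := idx_inj (Hs _ Hb) Hq2 (etrans Hk Hkq).
by rewrite -E1 -E2 Ha Hb.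
Qed.

Lemma init_in (s : seq nat) c q : c != 0 -> q.1 \in s -> q.2 \in s -> (forall a, a \in s -> a < n) ->
  nthcn (buildn N (initF c) [:: n; CodeSeq.code s]) (q.1 * n + q.2) = c.
Proof.
move=> Hc H1 H2 Hs; rewrite nthc_build idx_lt ?Hs // /initF memF_spec.
by rewrite (_ : has _ s = true) //; apply/hasP; exists q.1 => //; apply/hasP; exists q.2.
Qed.

Lemma PF_inv k : nthcn TF k != 0 -> PF k (nthcn TF k).
Proof.
apply: (It_sound HvlF H0F (P := PF)).
  move=> k0 /(init_spec HI) [-> Hq]; exists me, me; split => // q Hq1 Hq2 Hk.
  by exists q; split; [exact: Hq | exact: sp_nil].
move=> t y /mem_es [p [m [q [Hin ->]]]] _; rewrite frmFw_tr2 toFw_tr2.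
move=> [a [b [-> Ha Hb Hpath]]]; rewrite vlFw_tr2.
have [Hp1 Hp2 Hq1 Hq2 /andP[Hm1 Hm2]] := HA Hin.
rewrite /sop /san Ha Hb Hm1 Hm2.
exists (op a m.1), (op b m.2); split => //; try exact: Hopd.
move=> q' Hq1' Hq2' Hk.
have [E1 E2] := idx_inj Hq2 Hq2' Hk.
have [i [Hi Hip]] := Hpath p Hp1 Hp2 erefl.
exists i; split => //.
have -> : q' = q by case: q' q {Hin Hq1 Hq2 Hk} E1 E2 Hq1' Hq2' => ? ? [? ?] /= -> ->.
exact: (spath_snoc Hip Hin).
Qed.

Lemma PB_inv k : nthcn TB k != 0 -> PB k (nthcn TB k).
Proof.
apply: (It_sound HvlB H0B (P := PB)).
  move=> k0 /(init_spec HF) [_ Hq] q Hq1 Hq2 Hk.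
  by exists q, (me, me); split; [exact: Hq | exact: sp_nil].
move=> t y /mem_es [p [m [q [Hin ->]]]] _; rewrite frmFw_tr2 toFw_tr2 => Hpath q' Hq1' Hq2' Hk.
have [Hp1 Hp2 Hq1 Hq2 _] := HA Hin.
have [E1 E2] := idx_inj Hp2 Hq2' Hk.
have [f [mf [Hf Hqf]]] := Hpath q Hq1 Hq2 erefl.
exists f, (op m.1 mf.1, op m.2 mf.2); split => //.
have -> : q' = p by case: q' p {Hin Hp1 Hp2 Hk} E1 E2 Hq1' Hq2' => ? ? [? ?] /= -> ->.
exact: sp_cons Hin Hqf.
Qed.

Lemma TF_reach i m q : inI2 T i -> spath M T A i m q -> nthcn TF (q.1 * n + q.2) != 0.
Proof.
move=> Hi Hp.
have Hi0 : nthcn TF (i.1 * n + i.2) != 0.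
  apply: (It_reach _ _ _ _ H0F (R := fun k => k = i.1 * n + i.2)) => // _ ->.
  by move: Hi => /andP[H1 H2]; rewrite init_in // HI.
elim: Hp Hi0 {Hi} => // p m0 q0 n0 r Hin _ IH Hp; apply: IH.
have := It_closed (frm := frmFw) HvlF HtoF H0F (t := cd_tr2 (p, m0, q0)) (map_f _ Hin).
by rewrite frmFw_tr2 toFw_tr2 => /(_ Hp).
Qed.

Lemma TB_reach q m f : inF2 T f -> spath M T A q m f -> nthcn TB (q.1 * n + q.2) != 0.
Proof.
move=> Hf Hp; elim: Hp Hf => [p Hp1 Hp2|p m0 q0 n0 r Hin _ IH] Hf.
  by move: Hf => /andP[H1 H2]; rewrite (It_monoN H0B (leq0n _)) ?init_in // HF.
have := It_closed (frm := toFw) HvlB HtoB H0B (t := cd_tr2 (p, m0, q0)) (map_f _ Hin).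
by rewrite frmFw_tr2 toFw_tr2 => /(_ (IH Hf)).
Qed.


Definition rr k := if nthcn TB k != 0 then nthcn TF k else 0.
Definition rho (q : nat * nat) := dec (rr (q.1 * n + q.2)).
Definition nu (q : nat * nat) := dec (nuc dom me d eta (rr (q.1 * n + q.2))).

Lemma rr_sound q : q.1 < n -> q.2 < n -> rr (q.1 * n + q.2) != 0 ->
  exists a b, [/\ rr (q.1 * n + q.2) = (CodeSeq.code [:: a; b]).+1, dom a, dom b &
    relevant_pair M T A q (a, b)].
Proof.
move=> Hq1 Hq2; rewrite /rr; case: ifP => [HB HFk|]; last by rewrite eqxx.
have [a [b [E Ha Hb Hp]]] := PF_inv HFk.
have [i [Hi Hip]] := Hp q Hq1 Hq2 erefl.
have [f [mf [Hf Hqf]]] := PB_inv HB Hq1 Hq2 erefl.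
exists a, b; split => //; split; last by exists i.
by exists i, f, (a, b), mf.
Qed.

Lemma rr_complete q m : relevant_pair M T A q m -> rr (q.1 * n + q.2) != 0.
Proof.
move=> [[i [f [mi [mf [Hi Hf H1 H2]]]]] _].
by rewrite /rr (TB_reach Hf H2) (TF_reach Hi H1).
Qed.

Lemma rr_I2 q : inI2 T q -> rr (q.1 * n + q.2) != 0 -> rr (q.1 * n + q.2) = Ecode me.
Proof.
move=> /andP[H1 H2]; rewrite /rr; case: ifP => // _ HFk.
by rewrite (It_monoN H0F (leq0n _)) ?init_in ?HI //.
Qed.

Lemma valuation_ok : valuation M eta T A rho nu.
Proof.
move=> q Hq1 Hq2; rewrite /rho /nu.
case: (eqVneq (rr (q.1 * n + q.2)) 0) => Hr.
  rewrite Hr /=; split => //; split => // [[m Hm]].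
  by move: (rr_complete Hm); rewrite Hr.
have [a [b [E Ha Hb Hrel]]] := rr_sound Hq1 Hq2 Hr.
rewrite E dec_code; split.
- by split => // _; exists (a, b).
- move=> m [<-]; case: ifP => // HI2.
  by move: (rr_I2 HI2 Hr); rewrite E => /(congr1 dec); rewrite !dec_code => [[-> ->]].
- rewrite /nuc (_ : ((CodeSeq.code [:: a; b]).+1 == 0) = false) //.
  rewrite (_ : (CodeSeq.code [:: a; b]).+1.-1 = CodeSeq.code [:: a; b]) // !nthc_code.
  change (nth 0 [:: a; b] 0) with a; change (nth 0 [:: a; b] 1) with b.
  rewrite /sdd /seta /san Ha Hb -[(a, b).1]/a -[(a, b).2]/b.
  have [Eab|Hab] := eqVneq a b; first by subst b; rewrite /Ecode dec_code.
  case: ifP => Hdab.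
    rewrite /cd_pair /cd dec_code -surjective_pairing; split => // Hne.
    by case: Hne; apply/(Hd Ha Hb).
  split => // Heq; by move: Hdab; have /(Hd Ha Hb) -> := Heq.
Qed.

Lemma okc_rr k : cd_opt_pair (dec (rr k)) = rr k.
Proof.
rewrite /rr; case: ifP => // HB; case: (eqVneq (nthcn TF k) 0) => [->//|HFk].
by have [a [b [-> _ _ _]]] := PF_inv HFk; rewrite dec_code.
Qed.

Lemma okc_nuc r : cd_opt_pair (dec (nuc dom me d eta r)) = nuc dom me d eta r.
Proof.
rewrite /nuc; case: ifP => // _; case: ifP => _; first by rewrite /Ecode dec_code.
by case: ifP => // _; rewrite /seta /cd_pair /cd dec_code.
Qed.

Lemma ALG_out : ALG dom me op d eta x = cd_valuation n rho nu.
Proof.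
have [E0 E2 E3 E5] := xE.
rewrite /ALG /TFc /TBc E0 E2 E3 E5 buildnE.
pose G k := CodeSeq.code [:: cd_opt_pair (dec (rr k)); cd_opt_pair (dec (nuc dom me d eta (rr k)))].
transitivity (CodeSeq.code [seq G k | k <- iota 0 N]); last by rewrite -allpairs_iota.
congr CodeSeq.code; apply: eq_map => k.
by rewrite /G okc_rr okc_nuc.
Qed.

End Main.

Theorem proposition3 (M : nmonoid) (eta : nat * nat -> nat * nat) :
  effective_mge_monoid M eta ->
  exists alg : prog,
    forall (T : transducer) (A : sqautomaton),
      wf_transducer M T -> squared_output_automaton M T A ->
      exists rho nu : nat * nat -> option (nat * nat),
        valuation M eta T A rho nu /\
        eval alg [:: cd_input T A] (cd_valuation (nQ T) rho nu).
Proof.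
case=> [[Hmon _ _] [Heta [[pd Hpd] [[po Hpo] [[pq [d [Hd1 Hd2]]] [[pe Hpe] _]]]]]].
have Hme : Mdom M (me M) by case: Hmon.
have Hop := PR_oracle (h := mop M) Hme Hpd Hpo.
have Hdd := PR_oracle (h := fun a b => bool_nat (d a b)) Hme Hpd Hd2.
have Het := PR_oracle (h := fun a b => cd_pair (eta (a, b))) Hme Hpd Hpe.
have [alg Halg] := PR_ALG Hop Hdd Het.
exists alg => T A Hwf Hsoa.
exists (rho M T A), (nu M eta d T A); split.
  exact: (valuation_ok eta Hmon Hd1 Hwf Hsoa).
have := Halg [:: cd_input T A] erefl.
by rewrite /= (ALG_out eta d Hmon Hwf Hsoa).
Qed.
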